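(* Let $R$ be a ring, $S\in\mathrm{maxDen}_l(R)$, $A=S^{-1}R$ with group of units $A^*$, $\mathfrak a:=\mathrm{ass}(S)$, $\pi_{\mathfrak a}:R\to R/\mathfrak a$, $a\mapsto a+\mathfrak a$, and $\sigma_{\mathfrak a}:R\to A$, $r\mapsto r/1$ (so $R/\mathfrak a$ is identified with $\sigma_{\mathfrak a}(R)\subseteq A$). Then: (1) $S=S_{\mathfrak a}(R)$, $S=\pi_{\mathfrak a}^{-1}(S_0(R/\mathfrak a))$, $\pi_{\mathfrak a}(S)=S_0(R/\mathfrak a)$ and $A\cong S_0(R/\mathfrak a)^{-1}(R/\mathfrak a)=Q_l(R/\mathfrak a)$; (2) $S_0(A)=A^*$ and $S_0(A)\cap (R/\mathfrak a)=S_0(R/\mathfrak a)$; (3) $S=\sigma_{\mathfrak a}^{-1}(A^* )$; (4) $A^*$ is the group generated by $\sigma_{\mathfrak a}(S)$ and $\{\sigma_{\mathfrak a}(s)^{-1}\mid s\in S\}$; (5) $A^*=\{\sigma_{\mathfrak a}(s)^{-1}\sigma_{\mathfrak a}(t)\mid s,t\in S\}$; (6) $Q_l(A)=A$ and $\mathrm{Ass}_l(A)=\{0\}$; in particular, every $T\in\mathrm{Den}_l(A,0)$ satisfies $T\subseteq A^*$.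
   Context: Rings are associative with $1$. A multiplicatively closed subset $S$ ($1\in S$, $0\notin S$) is a left Ore set if $Sr\cap Rs\ne\emptyset$ for all $r\in R,s\in S$; $\mathrm{ass}(S):=\{r\mid sr=0\text{ for some }s\in S\}$; it is a left denominator set if moreover $rs=0$ ($s\in S$) implies $tr=0$ for some $t\in S$. $\mathrm{Den}_l(R)$ is the set of left denominator sets, $\mathrm{maxDen}_l(R)$ the set of its maximal elements under inclusion, $\mathrm{Ass}_l(R)=\{\mathrm{ass}(S)\mid S\in\mathrm{Den}_l(R)\}$, $\mathrm{Den}_l(R,\mathfrak b)=\{S\in\mathrm{Den}_l(R)\mid\mathrm{ass}(S)=\mathfrak b\}$, and $S_{\mathfrak b}(R)$ is the largest element of $\mathrm{Den}_l(R,\mathfrak b)$ (it exists). For a ring $B$, $S_0(B):=S_{0}(B)$ is the largest element of $\mathrm{Den}_l(B,0)$ and $Q_l(B):=S_0(B)^{-1}B$. *)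

(* Defs.v *)
From HB Require Import structures.
From mathcomp Require Import all_boot all_order all_algebra.
Set Implicit Arguments. Unset Strict Implicit. Unset Printing Implicit Defensive.
Import GRing.Theory.
Local Open Scope ring_scope.

Section Den.
Variable R : nzRingType.

Definition mult_closed (S : R -> Prop) : Prop :=
  S 1 /\ ~ S 0 /\ (forall a b, S a -> S b -> S (a * b)).

Definition left_Ore (S : R -> Prop) : Prop :=
  forall r s, S s -> exists s' r', S s' /\ s' * r = r' * s.

Definition ass (S : R -> Prop) (r : R) : Prop := exists s, S s /\ s * r = 0.

Definition left_den (S : R -> Prop) : Prop :=
  [/\ mult_closed S, left_Ore S &
      forall r s, S s -> r * s = 0 -> exists t, S t /\ t * r = 0].

Definition Den_l (b : R -> Prop) (S : R -> Prop) : Prop :=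
  left_den S /\ forall r, ass S r <-> b r.

Definition maxDen_l (S : R -> Prop) : Prop :=
  left_den S /\
  forall T, left_den T -> (forall x, S x -> T x) -> forall x, T x -> S x.

Definition Ass_l (I : R -> Prop) : Prop :=
  exists S, left_den S /\ forall r, I r <-> ass S r.

(* S_b(R): the largest element of Den_l(R, b) (which exists, by the
   paper's standing result); realized as the union of all elements of
   Den_l(R, b), which coincides with the largest element. *)
Definition S_ (b : R -> Prop) (x : R) : Prop :=
  exists T, Den_l b T /\ T x.

Definition zero_ideal (r : R) : Prop := r = 0.

Definition S0 : R -> Prop := S_ zero_ideal.

End Den.

(* f : R -> A is a left localization (left ring of fractions) of R at S,
   i.e. A = S^{-1}R up to isomorphism, f(r) = r/1 *)
Definition is_left_loc (R : nzRingType) (A : unitRingType)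
    (S : R -> Prop) (f : {rmorphism R -> A}) : Prop :=
  [/\ forall s, S s -> f s \is a GRing.unit,
      forall a : A, exists s r, S s /\ a = (f s)^-1 * f r &
      forall r, f r = 0 <-> ass S r].

Inductive gen_group (A : unitRingType) (X : A -> Prop) : A -> Prop :=
  | gen_mem x : X x -> gen_group X x
  | gen_one : gen_group X 1
  | gen_mul x y : gen_group X x -> gen_group X y -> gen_group X (x * y)
  | gen_inv x : gen_group X x -> gen_group X x^-1.

(* Main.v *)
Require Import Defs.
From HB Require Import structures.
From mathcomp Require Import all_boot all_order all_algebra.
Import GRing.Theory.
Local Open Scope ring_scope.

Section Gen.
Variable R : nzRingType.

Inductive gen (S T : R -> Prop) : R -> Prop :=
  | genS s : S s -> gen S T s
  | genT t : T t -> gen S T t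
  | genM x y : gen S T x -> gen S T y -> gen S T (x * y).

Lemma gen_sub (S T Q : R -> Prop) :
  maxDen_l S ->
  (forall r t, T t -> exists s t' r', [/\ S s, T t' & s * t' * r = r' * t]) ->
  (forall r t, T t -> r * t = 0 -> exists s t', [/\ S s, T t' & s * t' * r = 0]) ->
  ~ Q 0 -> (forall a b, Q a -> Q b -> Q (a * b)) ->
  (forall s, S s -> Q s) -> (forall t, T t -> Q t) ->
  forall t, T t -> S t.
Proof.
move=> [[[S1 [S0 SM]] SO S3] Smax] HO H3 nQ0 QM QS QT.
have QG : forall x, gen S T x -> Q x.
  by move=> x; elim=> [s /QS|t /QT|x1 y1 _ Hx _ Hy] //; apply: QM.
have ld : left_den (gen S T).
  split.
  - split; first exact: genS.
    split; first by move/QG.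
    by move=> a b; apply: genM.
  - move=> r m Hm; elim: Hm r => [s Hs|t Ht|x y Hx IHx Hy IHy] r.
    + have [s' [r' [Hs' E]]] := SO r s Hs.
      by exists s', r'; split=> //; apply: genS.
    + have [s [t' [r' [Hs Ht' E]]]] := HO r t Ht.
      by exists (s * t'), r'; split=> //; apply: genM; [apply: genS|apply: genT].
    + have [m1 [r1 [Hm1 E1]]] := IHy r.
      have [m2 [r2 [Hm2 E2]]] := IHx r1.
      exists (m2 * m1), r2; split; first exact: genM.
      by rewrite -mulrA E1 mulrA E2 mulrA.
  - move=> r m Hm; elim: Hm r => [s Hs|t Ht|x y Hx IHx Hy IHy] r E.
    + have [t [Ht E']] := S3 r s Hs E.
      by exists t; split=> //; apply: genS.
    + have [s [t' [Hs Ht' E']]] := H3 r t Ht E.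
      by exists (s * t'); split=> //; apply: genM; [apply: genS|apply: genT].
    + have [m1 [Hm1 E1]] := IHy (r * x) ltac:(by rewrite -mulrA).
      have [m2 [Hm2 E2]] := IHx (m1 * r) ltac:(by rewrite -mulrA).
      by exists (m2 * m1); split; [exact: genM|rewrite -mulrA].
move=> t Ht; apply: (Smax _ ld) => [x Hx|]; [exact: genS|exact: genT].
Qed.

Definition Qass (S : R -> Prop) (x : R) := forall y, ass S (x * y) -> ass S y.

Lemma Qass_mul S a b : Qass S a -> Qass S b -> Qass S (a * b).
Proof. by move=> Ha Hb y; rewrite -mulrA => /Ha /Hb. Qed.

Lemma Qass_0 S : left_den S -> ~ Qass S 0.
Proof.
move=> [[S1 [S0 SM]] _ _] H.
have [s [Hs E]] : ass S 1 by apply: H; exists 1; rewrite !mul0r mulr0.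
by apply: S0; rewrite -E mulr1.
Qed.

Lemma Qass_S S s : left_den S -> S s -> Qass S s.
Proof.
move=> [[S1 [S0 SM]] _ _] Hs y [s' [Hs' E]].
by exists (s' * s); split; [exact: SM|rewrite -mulrA].
Qed.

End Gen.

Require Import Defs.
From HB Require Import structures.
From mathcomp Require Import all_boot all_order all_algebra.
Import GRing.Theory.
Local Open Scope ring_scope.

Section ASide.
Variables (R : nzRingType) (S : R -> Prop) (HS : maxDen_l S)
  (A : unitRingType) (sigma : {rmorphism R -> A}) (Hloc : is_left_loc S sigma).

Let LD : left_den S := HS.1.
Let S1 : S 1. Proof. by case: LD => [[]]. Qed.
Let SM a b : S a -> S b -> S (a * b). Proof. by case: LD => [[_ [_ H]] _ _]; apply: H. Qed.
Let Su s : S s -> sigma s \is a GRing.unit. Proof. by case: Hloc => H _ _; apply: H. Qed.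
Let Srep a : exists s r, S s /\ a = (sigma s)^-1 * sigma r.
Proof. by case: Hloc => _ H _; apply: H. Qed.
Let Sker r : sigma r = 0 <-> ass S r. Proof. by case: Hloc => _ _ H; apply: H. Qed.

Lemma lift_eq x y : sigma x = sigma y -> exists s, S s /\ s * x = s * y.
Proof.
move=> E; have [s [Hs E']] : ass S (x - y) by apply/Sker; rewrite rmorphB E subrr.
by exists s; split=> //; apply/eqP; rewrite -subr_eq0 -mulrBr E'.
Qed.

Lemma liftS0 x : sigma x = 0 -> exists s, S s /\ s * x = 0.
Proof. by move/Sker. Qed.

Lemma part3 x : S x <-> sigma x \is a GRing.unit.
Proof.
split; first exact: Su.
move=> Hx.
pose T := fun y => sigma y \is a GRing.unit.
apply: (@gen_sub R S T T HS _ _ _ _ _ _ x Hx).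
- move=> r t; rewrite /T => Ht.
  have [s1 [r1 [Hs1 E]]] := Srep (sigma r * (sigma t)^-1).
  have E2 : sigma (s1 * r) = sigma (r1 * t).
    by rewrite !rmorphM /= -[sigma r](divrK Ht) E mulrA mulrA mulrV ?mul1r // Su.
  have [s2 [Hs2 E3]] := lift_eq _ _ E2.
  exists (s2 * s1), 1, (s2 * r1); split=> //; first exact: SM.
    by rewrite /T rmorph1 unitr1.
  by rewrite mulr1 -mulrA E3 mulrA.
- move=> r t; rewrite /T => Ht E.
  have E2 : sigma r = 0.
    by rewrite -[sigma r](mulrK Ht) -rmorphM E rmorph0 mul0r.
  have [s [Hs E3]] := liftS0 _ E2.
  by exists s, 1; split=> //; [rewrite /T rmorph1 unitr1|rewrite mulr1].
- by rewrite /T rmorph0 unitr0.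
- by move=> a b; rewrite /T rmorphM => Ha Hb; rewrite unitrMl.
- exact: Su.
- by [].
Qed.

End ASide.

Require Import Defs.
From HB Require Import structures.
From mathcomp Require Import all_boot all_order all_algebra.
Import GRing.Theory.
Local Open Scope ring_scope.

Section Ideal.
Variables (A : nzRingType) (T : A -> Prop) (LT : left_den T).
Let T0 : ~ T 0. Proof. by case: LT => [[_ []]]. Qed.
Let TM a b : T a -> T b -> T (a * b). Proof. by case: LT => [[_ [_ H]] _ _]; apply: H. Qed.
Let TO r s : T s -> exists s' r', T s' /\ s' * r = r' * s.
Proof. by case: LT => _ H _; apply: H. Qed.

Lemma assD a b : ass T a -> ass T b -> ass T (a + b).
Proof.
move=> [t1 [H1 E1]] [t2 [H2 E2]].
have [s' [r' [Hs' E]]] := TO t1 t2 H2.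
exists (s' * t1); split; first exact: TM.
by rewrite mulrDr -mulrA E1 mulr0 add0r E -mulrA E2 mulr0.
Qed.

Lemma assMl c a : ass T a -> ass T (c * a).
Proof.
move=> [t [Ht E]]; have [s' [r' [Hs' E']]] := TO c t Ht.
by exists s'; split=> //; rewrite mulrA E' -mulrA E mulr0.
Qed.

Lemma assMr c a : ass T a -> ass T (a * c).
Proof. by move=> [t [Ht E]]; exists t; split=> //; rewrite mulrA E mul0r. Qed.

Definition QA (x : A) := exists y t, T t /\ ass T (y * x - t).

Lemma QA_mul a b : QA a -> QA b -> QA (a * b).
Proof.
move=> [y1 [t1 [H1 E1]]] [y2 [t2 [H2 E2]]].
have [t3 [c [H3 E3]]] := TO y2 t1 H1.
exists (c * y1), (t3 * t2); split; first exact: TM.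
have -> : c * y1 * (a * b) - t3 * t2 = c * ((y1 * a - t1) * b) + t3 * (y2 * b - t2).
  rewrite mulrBl !mulrBr !mulrA -E3 addrA; congr (_ + _).
  by rewrite subrK.
by apply: assD; [apply: assMl; apply: assMr|apply: assMl].
Qed.

Lemma QA_0 : ~ QA 0.
Proof.
move=> [y [t [Ht [t' [Ht' E]]]]].
apply: T0; suff <- : t' * t = 0 by apply: TM.
by apply/eqP; rewrite -oppr_eq0 -mulrN -E mulr0 add0r.
Qed.

Lemma QA_T t : T t -> QA t.
Proof.
move=> Ht; exists 1, t; split=> //.
by rewrite mul1r subrr; exists t; split=> //; rewrite mulr0.
Qed.

Lemma QA_1 : QA 1.
Proof.
have T1 : T 1 by case: LT => [[]].
exact: QA_T.
Qed.

End Ideal.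

Section K.
Variables (R : nzRingType) (S : R -> Prop) (HS : maxDen_l S)
  (A : unitRingType) (sigma : {rmorphism R -> A}) (Hloc : is_left_loc S sigma).

Let LD : left_den S := HS.1.
Let SM a b : S a -> S b -> S (a * b). Proof. by case: LD => [[_ [_ H]] _ _]; apply: H. Qed.
Let Su s : S s -> sigma s \is a GRing.unit. Proof. by case: Hloc => H _ _; apply: H. Qed.
Let Srep a : exists s r, S s /\ a = (sigma s)^-1 * sigma r.
Proof. by case: Hloc => _ H _; apply: H. Qed.

Lemma Kunit (T : A -> Prop) : left_den T -> forall t, T t -> t \is a GRing.unit.
Proof.
move=> LT.
have TO r s : T s -> exists s' r', T s' /\ s' * r = r' * s.
  by case: LT => _ H _; apply: H.
have T3 r s : T s -> r * s = 0 -> exists t, T t /\ t * r = 0.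
  by case: LT => _ _ H; apply: H.
pose TR := fun r => exists s t, [/\ S s, T t & sigma r = sigma s * t].
have key : forall r, TR r -> S r.
  move=> r0 Hr0; apply: (@gen_sub R S TR (fun x => QA A T (sigma x)) HS _ _ _ _ _ _ r0 Hr0).
  - move=> r u [s [t [Hs Ht Eu]]].
    have [t' [a' [Ht' E1]]] := TO (sigma r) t Ht.
    have [s2 [r2 [Hs2 E2]]] := Srep t'.
    have Er2 : sigma r2 = sigma s2 * t' by rewrite E2 mulrA mulrV ?mul1r // Su.
    have Et : t = (sigma s)^-1 * sigma u by rewrite Eu mulrA mulVr ?mul1r // Su.
    have [s3 [r3 [Hs3 E3]]] := Srep (sigma s2 * a' * (sigma s)^-1).
    have E4 : sigma (s3 * r2 * r) = sigma (r3 * u).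
      rewrite !rmorphM /= Er2 !mulrA -(mulrA _ t') E1 !mulrA Et !mulrA.
      have -> : sigma r3 = sigma s3 * (sigma s2 * a' * (sigma s)^-1).
        by rewrite E3 mulrA mulrV ?mul1r // Su.
      by rewrite !mulrA.
    have [s4 [Hs4 E5]] := lift_eq _ _ _ _ Hloc _ _ E4.
    exists (s4 * s3), r2, (s4 * r3); split.
    + exact: SM.
    + by exists s2, t'.
    + by move: E5; rewrite !mulrA.
  - move=> r u [s [t [Hs Ht Eu]]] E.
    have E1 : (sigma r * sigma s) * t = 0 by rewrite -mulrA -Eu -rmorphM E rmorph0.
    have [t' [Ht' E2]] := T3 _ _ Ht E1.
    have E3 : t' * sigma r = 0.
      by rewrite -[t' * _](mulrK (Su _ Hs)) -(mulrA t') E2 mul0r.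
    have [s2 [r2 [Hs2 E4]]] := Srep t'.
    have E5 : sigma (r2 * r) = 0.
      by rewrite rmorphM -[sigma r2](mulVKr (Su _ Hs2)) -E4 -mulrA E3 mulr0.
    have [s4 [Hs4 E6]] := liftS0 _ _ _ _ Hloc _ E5.
    exists s4, r2; split=> //; last by rewrite -mulrA.
    exists s2, t'; split=> //.
    by rewrite E4 mulrA mulrV ?mul1r // Su.
  - by rewrite rmorph0; apply: (QA_0 _ _ LT).
  - by move=> a b; rewrite rmorphM; apply: (QA_mul _ _ LT).
  - move=> s Hs; exists (sigma s)^-1, 1; split; first by case: LT => [[]].
    by rewrite mulVr ?Su // subrr; exists 1; split; [case: LT => [[]]|rewrite mulr0].
  - move=> r [s [t [Hs Ht ->]]]; apply: (QA_mul _ _ LT) => //.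
      exists (sigma s)^-1, 1; split; first by case: LT => [[]].
      by rewrite mulVr ?Su // subrr; exists 1; split; [case: LT => [[]]|rewrite mulr0].
    exact: QA_T.
move=> t Ht.
have [s [r [Hs Et]]] := Srep t.
have Hr : S r.
  apply: key; exists s, t; split=> //.
  by rewrite Et mulrA mulrV ?mul1r // Su.
by rewrite Et unitrMl ?unitrV Su.
Qed.

End K.

Require Import Defs.
From HB Require Import structures.
From mathcomp Require Import all_boot all_order all_algebra.
Import GRing.Theory.
Local Open Scope ring_scope.

Section FMap.
Variables (R B : nzRingType) (A : unitRingType) (sigma : {rmorphism R -> A})
  (pi : {rmorphism R -> B}) (surj : forall y : B, exists x, pi x = y)
  (kerinc : forall x, pi x = 0 -> sigma x = 0).

Let surjb (y : B) : exists x, pi x == y.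
Proof. by have [x Hx] := surj y; exists x; apply/eqP. Qed.

Definition fmap (y : B) : A := sigma (xchoose (surjb y)).

Lemma fmapE x : fmap (pi x) = sigma x.
Proof.
rewrite /fmap; set z := xchoose _.
have /eqP Hz : pi z == pi x := xchooseP (surjb (pi x)).
apply/eqP; rewrite -subr_eq0 -rmorphB; apply/eqP/kerinc.
by rewrite rmorphB Hz subrr.
Qed.

Lemma fmap_zmod : zmod_morphism fmap.
Proof.
move=> a b; have [x <-] := surj a; have [y <-] := surj b.
by rewrite -rmorphB !fmapE rmorphB.
Qed.

Lemma fmap_monoid : monoid_morphism fmap.
Proof.
split; first by rewrite -(rmorph1 pi) fmapE rmorph1.
move=> a b; have [x <-] := surj a; have [y <-] := surj b.
by rewrite -rmorphM !fmapE rmorphM.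
Qed.

HB.instance Definition _ := GRing.isZmodMorphism.Build B A fmap fmap_zmod.
HB.instance Definition _ := GRing.isMonoidMorphism.Build B A fmap fmap_monoid.

Definition fmor : {rmorphism B -> A} := fmap.

Lemma fmorE x : fmor (pi x) = sigma x.
Proof. exact: fmapE. Qed.

End FMap.

Require Import Defs.
From HB Require Import structures.
From mathcomp Require Import all_boot all_order all_algebra.
Import GRing.Theory.
Local Open Scope ring_scope.

Lemma units_den (A : unitRingType) :
  Den_l (@zero_ideal A) (fun u : A => u \is a GRing.unit).
Proof.
split; first split.
- split; first exact: unitr1.
  split; first by rewrite unitr0.
  by move=> a b Ha Hb; rewrite unitrMl.
- move=> r s Hs; exists 1, (r / s); split; first exact: unitr1.
  by rewrite mul1r divrK.
- move=> r s Hs E; exists 1; split; first exact: unitr1.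
  by rewrite mul1r -(mulrK Hs r) E mul0r.
- move=> r; split.
    by move=> [u [Hu E]]; rewrite /zero_ideal -(mulKr Hu r) E mulr0.
  by rewrite /zero_ideal => ->; exists 1; split; [exact: unitr1|rewrite mulr0].
Qed.

Lemma S0A_unit (R : nzRingType) (S : R -> Prop) (HS : maxDen_l S)
  (A : unitRingType) (sigma : {rmorphism R -> A}) (Hloc : is_left_loc S sigma)
  (u : A) : S0 u <-> u \is a GRing.unit.
Proof.
split.
  by move=> [T [[LT _] Hu]]; exact: (Kunit _ _ HS _ _ Hloc _ LT _ Hu).
by move=> Hu; exists (fun u : A => u \is a GRing.unit); split=> //; apply: units_den.
Qed.

Require Import Defs.
From HB Require Import structures.
From mathcomp Require Import all_boot all_order all_algebra.
Import GRing.Theory.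
Local Open Scope ring_scope.

Theorem theorem3p9
  (R : nzRingType) (S : R -> Prop) (HS : maxDen_l S)
  (A : unitRingType) (sigma : {rmorphism R -> A})
  (Hloc : is_left_loc S sigma)
  (B : nzRingType) (pi : {rmorphism R -> B})
  (Hpi_surj : forall y : B, exists x, pi x = y)
  (Hpi_ker : forall x, pi x = 0 <-> ass S x) :
  (* (1) *)
  [/\ (forall x, S x <-> S_ (ass S) x),
      (forall x, S x <-> S0 (pi x)),
      (forall y, S0 y <-> exists x, S x /\ pi x = y) &
      exists f : {rmorphism B -> A},
        (forall x, f (pi x) = sigma x) /\ is_left_loc (@S0 B) f]
  /\
  (* (2) *)
  ((forall u : A, S0 u <-> u \is a GRing.unit) /\
   (forall x, S0 (sigma x) <-> S0 (pi x)))
  /\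
  (* (3) *)
  (forall x, S x <-> sigma x \is a GRing.unit)
  /\
  (* (4) *)
  (forall u : A, u \is a GRing.unit <->
     gen_group (fun v => exists s, S s /\ (v = sigma s \/ v = (sigma s)^-1)) u)
  /\
  (* (5) *)
  (forall u : A, u \is a GRing.unit <->
     exists s t, [/\ S s, S t & u = (sigma s)^-1 * sigma t])
  /\
  (* (6) *)
  [/\ is_left_loc (@S0 A) (@idfun A : {rmorphism A -> A}),
      (forall I : A -> Prop, Ass_l I <-> (forall x, I x <-> x = 0)) &
      (forall T : A -> Prop, Den_l (@zero_ideal A) T ->
         forall u, T u -> u \is a GRing.unit)].
Proof.
have LD : left_den S := HS.1.
have [[S1 [Sn0 SM]] SO S3] := LD.
have [Su Srep Sker] := Hloc.
have P3 := part3 _ _ HS _ _ Hloc.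
have P2a := S0A_unit _ _ HS _ _ Hloc.
have pilift : forall a b, pi a = pi b -> exists s, S s /\ s * a = s * b.
  move=> a b E; have [s [Hs E']] : ass S (a - b) by apply/Hpi_ker; rewrite rmorphB E subrr.
  by exists s; split=> //; apply/eqP; rewrite -subr_eq0 -mulrBr E'.
pose PS := fun y : B => exists x, S x /\ pi x = y.
have PSden : Den_l (@zero_ideal B) PS.
  split; first split.
  - split; first by exists 1; split=> //; rewrite rmorph1.
    split.
      move=> [x [Hx /Hpi_ker [s [Hs E]]]]; apply: Sn0; rewrite -E; exact: SM.
    move=> a b [x [Hx <-]] [y [Hy <-]]; exists (x * y); split; [exact: SM|exact: rmorphM].
  - move=> r s [x [Hx <-]]; have [r0 <-] := Hpi_surj r.
    have [s' [r' [Hs' E]]] := SO r0 x Hx.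
    exists (pi s'), (pi r'); split; first by exists s'.
    by rewrite -!rmorphM E.
  - move=> r s [x [Hx <-]] E; have [r0 Er] := Hpi_surj r; subst r.
    have /Hpi_ker [s1 [Hs1 E1]] : pi (r0 * x) = 0 by rewrite rmorphM.
    have [t [Ht E2]] := S3 (s1 * r0) x Hx ltac:(by rewrite -mulrA).
    exists (pi (t * s1)); split; first by exists (t * s1); split=> //; exact: SM.
    by rewrite -rmorphM -mulrA E2 rmorph0.
  - move=> y; split.
      move=> [u [[x [Hx <-]] E]]; have [y0 Ey] := Hpi_surj y; subst y.
      rewrite /zero_ideal; apply/Hpi_ker.
      have /Hpi_ker [s [Hs E1]] : pi (x * y0) = 0 by rewrite rmorphM.
      by exists (s * x); split; [exact: SM|rewrite -mulrA].
    rewrite /zero_ideal => ->; exists 1; split; last by rewrite mulr0.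
    by exists 1; split=> //; rewrite rmorph1.
have P1b : forall x, S x <-> S0 (pi x).
  move=> x; split.
    by move=> Hx; exists PS; split=> //; exists x.
  move=> [T [[LT HT] Hx]].
  have [[T1 [Tn0 TM]] TO T3] := LT.
  apply: (@gen_sub R S (fun u => T (pi u)) (Qass R S) HS _ _ _ _ _ _ x Hx).
  - move=> r u Hu; have [t' [b [Ht' E]]] := TO (pi r) (pi u) Hu.
    have [w Ew] := Hpi_surj t'; have [v Ev] := Hpi_surj b; subst t' b.
    have [s [Hs E2]] : exists s, S s /\ s * (w * r) = s * (v * u).
      by apply: pilift; rewrite !rmorphM.
    exists s, w, (s * v); split=> //.
    by rewrite -mulrA E2 mulrA.
  - move=> r u Hu E.
    have [t [Ht E2]] := T3 (pi r) (pi u) Hu ltac:(by rewrite -rmorphM E rmorph0).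
    have [w Ew] := Hpi_surj t; subst t.
    have /Hpi_ker [s [Hs E3]] : pi (w * r) = 0 by rewrite rmorphM.
    by exists s, w; split=> //; rewrite -mulrA.
  - exact: Qass_0.
  - exact: Qass_mul.
  - by move=> s Hs; apply: Qass_S.
  - move=> u Hu y /Hpi_ker; rewrite rmorphM => E.
    have : ass T (pi y) by exists (pi u).
    by move/HT; rewrite /zero_ideal => /Hpi_ker.
have P1c : forall y, S0 y <-> exists x, S x /\ pi x = y.
  move=> y; split.
    by have [x <-] := Hpi_surj y; move/P1b => Hx; exists x.
  by move=> [x [Hx <-]]; apply/P1b.
have kerinc : forall x, pi x = 0 -> sigma x = 0.
  by move=> x /Hpi_ker /Sker.
split; first split.
- move=> x; split.
    by move=> Hx; exists S; split=> //; split.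
  move=> [T [[LT HT] Hx]].
  have [[T1 [Tn0 TM]] TO T3] := LT.
  apply: (@gen_sub R S T (Qass R S) HS _ _ _ _ _ _ x Hx).
  - move=> r t Ht; have [t' [r' [Ht' E]]] := TO r t Ht.
    by exists 1, t', r'; split=> //; rewrite mul1r.
  - move=> r t Ht E; have [t' [Ht' E']] := T3 r t Ht E.
    by exists 1, t'; split=> //; rewrite mul1r.
  - exact: Qass_0.
  - exact: Qass_mul.
  - by move=> s Hs; apply: Qass_S.
  - move=> t Ht y /HT [t' [Ht' E]].
    by apply/HT; exists (t' * t); split; [exact: TM|rewrite -mulrA].
- exact: P1b.
- exact: P1c.
- exists (fmor _ _ _ sigma pi Hpi_surj kerinc); split; first exact: fmorE.
  split.
  + by move=> y /P1c [x [Hx <-]]; rewrite fmorE; apply: Su.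
  + move=> a; have [s [r [Hs ->]]] := Srep a.
    by exists (pi s), (pi r); split; [apply/P1b|rewrite !fmorE].
  + move=> y; have [x <-] := Hpi_surj y; rewrite fmorE; split.
      move=> /Sker /Hpi_ker ->; exists 1; split; last by rewrite mulr0.
      by apply/P1c; exists 1; split=> //; rewrite rmorph1.
    move=> [u [/P1c [x0 [Hx0 <-]] E]].
    apply/Sker/Hpi_ker.
    have : PS (pi x0) by exists x0.
    move=> HPS; have : ass PS (pi x) by exists (pi x0).
    by case: PSden => _ /(_ (pi x)) [].
split; first split.
- exact: P2a.
- by move=> x; split=> H; [apply/P1b/P3/P2a|apply/P2a/P3/P1b].
split; first exact: P3.
have P5 : forall u : A, u \is a GRing.unit <->
     exists s t, [/\ S s, S t & u = (sigma s)^-1 * sigma t].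
  move=> u; split.
    move=> Hu; have [s [r [Hs E]]] := Srep u.
    exists s, r; split=> //; apply/P3.
    have -> : sigma r = sigma s * u by rewrite E mulrA mulrV ?mul1r // Su.
    by rewrite unitrMr // Su.
  by move=> [s [t [Hs Ht ->]]]; rewrite unitrMl ?unitrV Su.
split.
  move=> u; split.
    move/P5=> [s [t [Hs Ht ->]]]; apply: gen_mul; apply: gen_mem.
      by exists s; split=> //; right.
    by exists t; split=> //; left.
  elim=> [x [s [Hs [->|->]]]| |x y _ Hx _ Hy|x _ Hx].
  - exact: Su.
  - by rewrite unitrV Su.
  - exact: unitr1.
  - by rewrite unitrMl.
  - by rewrite unitrV.
split; first exact: P5.
split.
- split.
  + by move=> s /P2a.
  + move=> a; exists 1, a; split; first by apply/P2a; exact: unitr1.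
    by rewrite invr1 mul1r.
  + move=> r; split.
      move=> E; have -> : r = 0 by exact: E.
      exists 1; split; last by rewrite mulr0.
      by apply/P2a; exact: unitr1.
    by move=> [u [/P2a Hu E]]; rewrite /= -(mulKr Hu r) E mulr0.
- move=> I; split.
    move=> [T [LT HI]] x; split.
      by move/HI => [t [Ht E]]; have Hu := Kunit _ _ HS _ _ Hloc _ LT _ Ht; rewrite -(mulKr Hu x) E mulr0.
    by move=> ->; apply/HI; exists 1; split; [case: LT => [[]]|rewrite mulr0].
  move=> HI; exists (fun u : A => u \is a GRing.unit); split; first by case: (units_den A).
  move=> x; have [_ H] := units_den A; split.
    by move/HI => Hx; apply/H.
  by move/H => Hx; apply/HI.
- by move=> T [LT _] u Hu; apply: (Kunit _ _ HS _ _ Hloc _ LT _ Hu).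
Qed.
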